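(* Let $L=\{\ell_1,\dots,\ell_n\}$, $R=\{r_1,\dots,r_d\}$ and let $G$ be a spanning tree of the complete bipartite graph on $L\sqcup R$ with right degree vector $v=(v_1,\dots,v_d)$. For each $r_k\in R$ there is a unique maximal tope with right degree vector $v-\mathbf{1}_{[d]\setminus\{k\}}$ contained in $G$.
   Context: Graphs are identified with edge sets; the right degree vector is $(\deg r_1,\dots,\deg r_d)$. $\mathbf{1}_{A}$ denotes the 0/1 indicator vector of $A\subseteq[d]$, so $v-\mathbf{1}_{[d]\setminus\{k\}}$ subtracts $1$ from every coordinate except the $k$-th. Here a maximal tope with right degree vector $w$ is a bipartite graph on $L\sqcup R$ in which every node of $L$ has degree exactly $1$ and $r_i$ has degree $w_i$ for each $i$. *)

(* Defs.v *)
From mathcomp Require Import all_boot all_order all_algebra.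
Set Implicit Arguments. Unset Strict Implicit. Unset Printing Implicit Defensive.

(* Bipartite graphs on L ⊔ R with L = 'I_n, R = 'I_d are identified with
   their edge sets G : {set 'I_n * 'I_d}; (l, r) \in G is the edge {ℓ_l, r_r}. *)

Definition badj (n d : nat) (G : {set 'I_n * 'I_d}) : rel ('I_n + 'I_d) :=
  fun x y => match x, y with
             | inl l, inr r => (l, r) \in G
             | inr r, inl l => (l, r) \in G
             | _, _ => false
             end.

Definition bconnected (n d : nat) (G : {set 'I_n * 'I_d}) : Prop :=
  forall x y : 'I_n + 'I_d, connect (badj G) x y.

Definition bacyclic (n d : nat) (G : {set 'I_n * 'I_d}) : Prop :=
  forall p : seq ('I_n + 'I_d), uniq p -> 2 < size p -> ~~ cycle (badj G) p.

Definition spanning_tree (n d : nat) (G : {set 'I_n * 'I_d}) : Prop :=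
  bconnected G /\ bacyclic G.

Definition ldeg (n d : nat) (G : {set 'I_n * 'I_d}) (l : 'I_n) : nat :=
  #|[set e in G | e.1 == l]|.

Definition rdeg (n d : nat) (G : {set 'I_n * 'I_d}) (r : 'I_d) : nat :=
  #|[set e in G | e.2 == r]|.

(* Maximal tope with right degree vector w (integer-valued, to avoid
   truncated subtraction): every left node has degree exactly 1 and r_i has
   degree w_i. *)
Definition maximal_tope (n d : nat) (w : 'I_d -> int) (T : {set 'I_n * 'I_d})
  : Prop :=
  (forall l : 'I_n, ldeg T l = 1%N) /\
  (forall i : 'I_d, ((rdeg T i)%:Z = w i)%R).

(* Main.v *)
Require Import Defs.
From mathcomp Require Import all_boot all_order all_algebra.
From mathcomp Require Import zify.
Set Implicit Arguments. Unset Strict Implicit. Unset Printing Implicit Defensive.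

Section Tree.
Variables (n d : nat) (G : {set 'I_n * 'I_d}) (k : 'I_d).
Hypothesis Hconn : bconnected G.
Hypothesis Hacyc : bacyclic G.

Local Notation V := ('I_n + 'I_d)%type.
Local Notation e := (badj G).
Local Notation root := (@inr 'I_n 'I_d k).

Definition isl (x : V) : bool := if x is inl _ then true else false.

Lemma e_sym x y : e x y = e y x.
Proof. by case: x => x; case: y => y. Qed.

Lemma e_side x y : e x y -> isl x = ~~ isl y.
Proof. by case: x => x; case: y => y. Qed.

Definition reachin (v : V) (m : nat) : bool :=
  [exists p : m.-tuple V, path e v p && (last v p == root)].

Lemma ex_reach v : exists m, reachin v m.
Proof.
have /connectP [p Hp Hl] := Hconn v root.
exists (size p); apply/existsP; exists (in_tuple p) => /=.
by rewrite Hp -Hl eqxx.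
Qed.

Definition dist v := ex_minn (ex_reach v).

Lemma dist_le v p : path e v p -> last v p = root -> dist v <= size p.
Proof.
move=> Hp Hl; rewrite /dist; case: ex_minnP => m _ Hm; apply: Hm.
by apply/existsP; exists (in_tuple p); rewrite /= Hp Hl eqxx.
Qed.

Lemma dist_path v : exists p, [/\ path e v p, last v p = root & size p = dist v].
Proof.
rewrite /dist; case: ex_minnP => m /existsP [p /andP [Hp /eqP Hl]] _.
by exists p; rewrite size_tuple.
Qed.

Lemma dist_root : dist root = 0.
Proof. by apply/eqP; rewrite -leqn0 (@dist_le root [::]). Qed.

Lemma dist0 v : dist v = 0 -> v = root.
Proof.
move=> H; have [p [Hp Hl Hs]] := dist_path v.
by move: Hs Hl; rewrite H; clear Hp; case: p.
Qed.

Lemma dist_adj u v : e u v -> dist u <= (dist v).+1.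
Proof.
move=> Huv; have [p [Hp Hl Hs]] := dist_path v.
by rewrite -Hs (@dist_le u (v :: p)) //= Huv.
Qed.

Lemma path_parity v p : path e v p -> last v p = root -> odd (size p) = isl v.
Proof.
elim: p v => [|u p IH] v /=; first by move=> _ ->.
move=> /andP [Hvu Hp] Hl; rewrite (IH u) // (e_side Hvu).
by case: (isl u).
Qed.

Lemma dist_parity v : odd (dist v) = isl v.
Proof. by have [p [Hp Hl <-]] := dist_path v; apply: path_parity. Qed.

Lemma dist_edge u v : e u v -> (dist u = (dist v).+1) \/ (dist v = (dist u).+1).
Proof.
move=> Huv; have H1 := dist_adj Huv; rewrite e_sym in Huv.
have H2 := dist_adj Huv; have Hs := e_side Huv.
have Hne : dist u != dist v.
  apply/eqP => Heq; move: Hs; rewrite -!dist_parity Heq.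
  by case: (odd _).
lia.
Qed.

Lemma dist_parent v : v != root -> exists u, e v u /\ (dist u).+1 = dist v.
Proof.
move=> Hv; have [[|u p] [Hp Hl Hs]] := dist_path v.
  by move: Hl Hv => /= ->; rewrite eqxx.
move: Hp => /= /andP [Hvu Hp]; exists u; split => //.
have := dist_le Hp Hl; have := dist_adj Hvu; move: Hs => /= Hs; lia.
Qed.

Definition par (u v : V) := e u v && ((dist v).+1 == dist u).

Lemma chain E : forall a b, a != b -> dist a = E -> dist b = E ->
  exists s, [/\ path e a (rcons s b), uniq (a :: rcons s b)
            & all (fun v => dist v < E) s].
Proof.
elim: E => [|E IH] a b Hab Ha Hb.
  by move: Hab; rewrite (dist0 Ha) (dist0 Hb) eqxx.
have Ha' : a != root by apply/eqP => Har; move: Ha; rewrite Har dist_root.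
have Hb' : b != root by apply/eqP => Hbr; move: Hb; rewrite Hbr dist_root.
have [pa [Hapa Hpa]] := dist_parent Ha'.
have [pb [Hbpb Hpb]] := dist_parent Hb'.
rewrite e_sym in Hbpb.
have Hdpa : dist pa = E by lia.
have Hdpb : dist pb = E by lia.
have Hneq : forall x y, dist x != dist y -> x != y.
  by move=> x y H; apply: contraNneq H => ->.
case: (eqVneq pa pb) => [Heq | Hne].
  exists [:: pa]; split => /=.
  - by rewrite Hapa Heq Hbpb.
  - rewrite !inE negb_or Hab Hneq ?Hneq //; rewrite ?Ha ?Hb ?Hdpa; lia.
  - rewrite Hdpa; lia.
have [s [Hs1 Hs2 Hs3]] := IH _ _ Hne Hdpa Hdpb.
exists (pa :: rcons s pb); split.
- by rewrite rcons_cons /= Hapa rcons_path Hs1 last_rcons Hbpb.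
- have Hnin : forall x, dist x = E.+1 -> x \notin pa :: rcons s pb.
    move=> x Hx; apply/negP => Hin.
    have : dist x <= E.
      move: Hin; rewrite inE mem_rcons inE => /or3P [/eqP->|/eqP->|Hin].
      + by rewrite Hdpa.
      + by rewrite Hdpb.
      + by move/allP: Hs3 => /(_ x Hin) => H; lia.
    lia.
  by rewrite cons_uniq rcons_uniq mem_rcons in_cons negb_or Hab !Hnin.
- rewrite /= Hdpa ltnSn /= all_rcons Hdpb ltnSn /=.
  by apply: sub_all Hs3 => v /= H; lia.
Qed.

Lemma par_uniq x y1 y2 : par x y1 -> par x y2 -> y1 = y2.
Proof.
move=> /andP [H1 /eqP D1] /andP [H2 /eqP D2].
apply/eqP; apply: contraT => Hne.
have Dy : dist y1 = dist y2 by lia.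
have [s [Hs1 Hs2 Hs3]] := chain Hne erefl (esym Dy).
have Hnin : x \notin y1 :: rcons s y2.
  apply/negP; rewrite in_cons mem_rcons in_cons => /or3P [/eqP Hx|/eqP Hx|Hx].
  - by move: D1; rewrite -Hx; lia.
  - by move: D2; rewrite -Hx; lia.
  - by move/allP: Hs3 => /(_ x Hx); lia.
have := Hacyc (p := x :: y1 :: rcons s y2).
rewrite cons_uniq Hnin Hs2 /= size_rcons => /(_ erefl erefl).
rewrite H1 rcons_path => /negP H; exfalso; apply: H; apply/andP; split => //.
rewrite last_rcons e_sym; apply/andP; split => //.
Qed.

Lemma par_edge u v : e u v -> par u v || par v u.
Proof.
move=> Huv; rewrite /par Huv e_sym Huv /=.
by case: (dist_edge Huv) => ->; rewrite eqxx ?orbT.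
Qed.

Lemma par_excl u v : par u v -> ~~ par v u.
Proof. by move=> /andP [_ /eqP H1]; apply/negP => /andP [_ /eqP H2]; lia. Qed.

Lemma par_e u v : par u v -> e u v.
Proof. by case/andP. Qed.

Definition Tc : {set 'I_n * 'I_d} := [set p | par (inl p.1) (inr p.2)].

Lemma Tc_sub : Tc \subset G.
Proof. by apply/subsetP => [[l r]]; rewrite inE => /par_e. Qed.

Lemma par_l l : exists r, par (inl l) (inr r).
Proof.
have [[u|r] [Hu Hd]] := dist_parent (v := inl l) isT; first by [].
by exists r; rewrite /par Hu Hd eqxx.
Qed.

Lemma Tc_ldeg l : ldeg Tc l = 1.
Proof.
have [r Hr] := par_l l.
rewrite /ldeg (_ : [set x in Tc | x.1 == l] = [set (l, r)]) ?cards1 //.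
apply/setP => [[l' r']]; rewrite !inE /= xpair_eqE.
case: (eqVneq l' l) => [->|]; rewrite ?andbF ?andbT //.
apply/idP/idP => [H|/eqP->//].
by have [->] := par_uniq H Hr; rewrite eqxx.
Qed.

Lemma Tc_rdeg i : rdeg G i = rdeg Tc i + (i != k).
Proof.
rewrite /rdeg -(cardsID Tc).
congr (_ + _).
  apply: eq_card => x; rewrite !inE.
  case: (boolP (par _ _)) => Hx; rewrite ?andbF ?andbT //.
  by move: (par_e Hx) => /=; case: x Hx => l r /= _ ->.
case: (eqVneq i k) => [->|Hik] /=.
  apply/eqP; rewrite cards_eq0; apply/eqP/setP => [[l r]]; rewrite !inE /=.
  apply/negP => /and3P [Hn HG /eqP Hr]; subst r.
  have := par_edge (u := inl l) (v := inr k) HG.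
  rewrite (negbTE Hn) /= /par dist_root.
  by case/andP.
have Hik' : (inr i : V) != root by apply/eqP => -[] /eqP; rewrite (negbTE Hik).
have [[l0|r0] [Hu Hd]] := dist_parent Hik'; last by [].
have Hp : par (inr i) (inl l0) by rewrite /par Hu Hd eqxx.
rewrite (_ : _ :\: _ = [set (l0, i)]) ?cards1 //.
apply/setP => [[l r]]; rewrite !inE /= xpair_eqE.
apply/idP/idP.
  move=> /and3P [Hn HG /eqP Hr]; subst r; rewrite eqxx andbT.
  have := par_edge (u := inl l) (v := inr i) HG.
  rewrite (negbTE Hn) /= => Hp'.
  by have [->] := par_uniq Hp' Hp.
move=> /andP [/eqP -> /eqP ->]; rewrite eqxx andbT.
rewrite (par_excl Hp) /=.
by have := par_e Hp.
Qed.

Lemma Tc_unique T' : (forall l, ldeg T' l = 1) ->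
  (forall i, rdeg T' i = rdeg Tc i) -> T' \subset G -> T' = Tc.
Proof.
move=> HL HR HG.
have Hpick : forall l, exists r, (l, r) \in T' /\ forall r', (l, r') \in T' -> r' = r.
  move=> l; have := HL l; rewrite /ldeg => /eqP /cards1P [[l0 r0] Hs].
  have : (l0, r0) \in [set x in T' | x.1 == l] by rewrite Hs set11.
  rewrite inE /= => /andP [H0 /eqP E0]; subst l0.
  exists r0; split => // r' Hr'.
  have : (l, r') \in [set x in T' | x.1 == l] by rewrite inE Hr' eqxx.
  by rewrite Hs inE xpair_eqE eqxx /= => /eqP.
have Bad : T' \subset Tc.
  apply/subsetP => x0 Hx0; apply: contraT => Hx0n.
  pose B := [pred p | (p \in T') && (p \notin Tc)].
  have HB : B x0 by rewrite /B /= Hx0 Hx0n.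
  case: (@arg_maxnP _ x0 B (fun p => dist (inl p.1)) HB) => [[l r]] /andP [HT HnT] Hmax.
  have HGl : (l, r) \in G := subsetP HG _ HT.
  have Hpr : par (inr r) (inl l).
    have := par_edge (u := inl l) (v := inr r) HGl.
    by rewrite inE /= in HnT; rewrite (negbTE HnT).
  have Hns : ~~ ([set x in Tc | x.2 == r] \subset [set x in T' | x.2 == r]).
    apply/negP => Hsub.
    have : [set x in Tc | x.2 == r] \subset [set x in T' | x.2 == r] :\ (l, r).
      apply/subsetP => x Hx; rewrite in_setD1 (subsetP Hsub x Hx) andbT.
      by apply: contraTneq Hx => ->; rewrite inE (negbTE HnT).
    move/subset_leq_card.
    have := cardsD1 (l, r) [set x in T' | x.2 == r].
    rewrite inE HT eqxx /=.
    have := HR r; rewrite /rdeg; move=> A1 A2 A3; by have := leq_ltn_trans A3 (leqnn _ : _ < 1 + _); rewrite -A2 A1 ltnn.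
  case/subsetPn: Hns => [[l' r']]; rewrite !inE /= => /andP [Hpar /eqP Er] Hn; subst r'.
  rewrite eqxx andbT in Hn.
  have [r'' [Hr''1 Hr''2]] := Hpick l'.
  case: (boolP ((l', r'') \in Tc)) => Hc.
    rewrite inE /= in Hc; have [E] := par_uniq Hc Hpar; subst r''.
    by rewrite Hr''1 in Hn.
  have := Hmax (l', r''); rewrite /B /= Hr''1 Hc => /(_ isT) /=.
  move: Hpar Hpr => /andP [_ /eqP D1] /andP [_ /eqP D2]; by rewrite -D1 -D2 ltnNge leqnSn.
apply/eqP; rewrite eqEsubset Bad /=; apply/subsetP => [[l r]] HTc.
have [r0 [H0 _]] := Hpick l.
have := subsetP Bad _ H0; rewrite !inE /= in HTc * => H0'.
by have [E] := par_uniq H0' HTc; subst r0.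
Qed.

End Tree.

Theorem proposition2p9 (n d : nat) (G : {set 'I_n * 'I_d}) :
  spanning_tree G ->
  forall k : 'I_d,
    exists! T : {set 'I_n * 'I_d},
      maximal_tope (fun i : 'I_d => ((rdeg G i)%:Z - (i != k)%:Z)%R) T
      /\ T \subset G.
Proof.
move=> [Hc Ha] k; exists (Tc k Hc); split.
  split; last exact: Tc_sub.
  split; first exact: (Tc_ldeg k Hc Ha).
  by move=> i; rewrite (Tc_rdeg k Hc Ha) PoszD GRing.addrK.
move=> T' [[H1 H2] H3]; symmetry; apply: (Tc_unique Ha) => // i.
by have := H2 i; rewrite (Tc_rdeg k Hc Ha) PoszD GRing.addrK => -[].
Qed.
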